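(* Let ${\bf i}=(i_n)_{n\ge1}\in\{0,1\}^{\mathbb{N}}$ and define $g_{\bf i}(x)=(1-x)\sum_{n=1}^\infty i_nx^{n-1}$ for $x\in(0,1)$. Then for every integer $k\ge2$ and every $x\in[1-\frac1k,1-\frac1{k+1})$, $|g_{\bf i}'(x)|\le kx^{k-1}$. *)

(* Defs.v *)
From Stdlib Require Import Reals Lra.
From Coquelicot Require Import Coquelicot.
Open Scope R_scope.

(* A 0-1 sequence i = (i_n)_{n>=1} is represented by i : nat -> bool;
   only the values i n for n >= 1 are used (i 0 is ignored). *)

Definition g (i : nat -> bool) (x : R) : R :=
  (1 - x) * Series (fun m : nat => if i (S m) then x ^ m else 0).

(* Main.v *)
Require Import Defs.
From Stdlib Require Import Reals Lra Lia.
From Coquelicot Require Import Coquelicot.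
Open Scope R_scope.

Lemma rad1 (a : nat -> R) : (forall n, Rabs (a n) <= 1) -> Rbar_le 1 (CV_radius a).
Proof.
  intros H. apply (proj1 (CV_radius_bounded a)). exists 1. intros n.
  rewrite pow1, Rmult_1_r. apply H.
Qed.

Definition cc (x : R) (m : nat) : R := INR m * x ^ (m - 1) - INR (S m) * x ^ m.

Lemma deriv_series (i : nat -> bool) (x : R) : 0 < x < 1 ->
  exists D, is_derive (g i) x D /\
    is_series (fun m => if i (S m) then cc x m else 0) D.
Proof.
  intros Hx.
  set (a := fun m => if i (S m) then 1 else 0).
  assert (Ha : forall n, Rabs (a n) <= 1).
  { intros n; unfold a; destruct (i (S n)); rewrite ?Rabs_R1, ?Rabs_R0; lra. }
  assert (Hr : Rbar_lt (Rabs x) (CV_radius a)).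
  { eapply Rbar_lt_le_trans; [| apply rad1, Ha]. simpl. rewrite Rabs_pos_eq; lra. }
  assert (Hr' : Rbar_lt (Rabs x) (CV_radius (PS_derive a))) by (rewrite CV_radius_derive; auto).
  assert (Hg : forall y, g i y = (1 - y) * PSeries a y).
  { intros y. unfold g, PSeries. f_equal. apply Series_ext. intros m.
    unfold a.
    destruct (i (S m)); ring. }
  set (P := PSeries a x). set (P' := PSeries (PS_derive a) x).
  exists (-1 * P + (1 - x) * P'). split.
  - eapply is_derive_ext. { intros t. symmetry. apply Hg. }
    apply (is_derive_mult (fun y => 1 - y) (PSeries a) x (-1) P').
    + auto_derive; auto; ring.
    + apply is_derive_PSeries; auto.
    + intros; unfold mult; simpl; ring.
  - assert (H1 := PSeries_correct a x (CV_radius_inside a x Hr)).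
    assert (H2 := PSeries_correct _ x (CV_radius_inside _ x Hr')).
    unfold is_pseries in H1, H2. fold P in H1. fold P' in H2.
    set (t := fun m => INR m * a m * x ^ (m - 1)).
    assert (H3 : is_series t P').
    { apply (is_series_decr_1 t P').
      match goal with |- is_series _ ?l => replace l with P' end.
      2:{ unfold t; simpl. unfold plus, opp; simpl. ring. }
      eapply is_series_ext; [| exact H2]. intros n. cbv beta. rewrite pow_n_pow.
      unfold t, PS_derive, scal; simpl. unfold mult; simpl. rewrite ?Nat.sub_0_r. ring. }
    assert (H4 := is_series_plus _ _ _ _ (is_series_scal (-1) _ _ H1) (is_series_scal (1 - x) _ _ H3)).
    eapply is_series_ext; [| exact H4]. intros n. cbv beta. rewrite pow_n_pow.
    unfold plus, scal, t, cc, a; simpl. unfold mult; simpl.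
    destruct (i (S n)); [destruct n; simpl; rewrite ?Nat.sub_0_r; ring | ring].
Qed.

Section Bounds.
Variables (k : nat) (x : R).
Hypothesis Hk : (2 <= k)%nat.
Hypothesis H1 : INR k * (1 - x) <= 1.
Hypothesis H2 : 1 < (INR k + 1) * (1 - x).
Hypothesis Hx : 0 < x < 1.

Lemma cneg m : (m < k)%nat -> cc x m <= 0.
Proof.
  intros Hm. unfold cc. destruct m as [|m].
  - simpl. lra.
  - replace (S m - 1)%nat with m by lia. rewrite !S_INR. change (x ^ S m) with (x * x ^ m).
    assert (0 <= x ^ m) by (apply pow_le; lra).
    assert (H0 : INR (S (S m)) <= INR k) by (apply le_INR; lia).
    rewrite !S_INR in H0.
    assert ((INR m + 1 + 1) * (1 - x) <= 1) by nra.
    assert (x ^ m * ((INR m + 1 + 1) * (1 - x) - 1) <= 0) by (apply Rmult_le_0_l; lra).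
    nra.
Qed.

Lemma cpos m : (k <= m)%nat -> 0 <= cc x m.
Proof.
  intros Hm. unfold cc. destruct m as [|m]. lia.
  replace (S m - 1)%nat with m by lia. rewrite !S_INR. change (x ^ S m) with (x * x ^ m).
  assert (0 <= x ^ m) by (apply pow_le; lra).
  assert (INR k <= INR m + 1) by (rewrite <- S_INR; apply le_INR; lia).
  assert (1 <= (INR m + 1 + 1) * (1 - x)) by nra.
  assert (0 <= x ^ m * ((INR m + 1 + 1) * (1 - x) - 1)) by (apply Rmult_le_pos; lra).
  nra.
Qed.

Lemma csum N : sum_f_R0 (cc x) N = - INR (S N) * x ^ N.
Proof.
  induction N as [|N IH].
  - unfold cc; simpl; ring.
  - simpl sum_f_R0. rewrite IH. unfold cc.
    replace (S N - 1)%nat with N by lia. rewrite !S_INR. simpl. ring.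
Qed.

Definition u m := if (m <? k)%nat then cc x m else 0.

Lemma Fdec N d : sum_f_R0 u (N + d) <= sum_f_R0 u N.
Proof.
  induction d as [|d IH].
  - rewrite Nat.add_0_r; lra.
  - rewrite Nat.add_succ_r. simpl sum_f_R0.
    assert (u (S (N + d)) <= 0).
    { unfold u. destruct (Nat.ltb_spec (S (N+d)) k). apply cneg; auto. lra. }
    lra.
Qed.

Lemma Fconst d : sum_f_R0 u (k - 1 + d) = sum_f_R0 u (k - 1).
Proof.
  induction d as [|d IH].
  - rewrite Nat.add_0_r; lra.
  - rewrite Nat.add_succ_r. simpl sum_f_R0. rewrite IH.
    unfold u. destruct (Nat.ltb_spec (S (k - 1 + d)) k). lia. ring.
Qed.

Lemma Fk : sum_f_R0 u (k - 1) = - INR k * x ^ (k - 1).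
Proof.
  rewrite (sum_eq u (cc x)). rewrite csum. replace (S (k - 1)) with k by lia. ring.
  intros j Hj. unfold u. destruct (Nat.ltb_spec j k). auto. lia.
Qed.

Lemma Fbound N : - INR k * x ^ (k - 1) <= sum_f_R0 u N.
Proof.
  rewrite <- Fk, <- (Fconst N). rewrite Nat.add_comm. apply Fdec.
Qed.

Lemma ebound (i : nat -> bool) N :
  Rabs (sum_f_R0 (fun m => if i (S m) then cc x m else 0) N) <= INR k * x ^ (k - 1).
Proof.
  assert (L : sum_f_R0 u N <= sum_f_R0 (fun m => if i (S m) then cc x m else 0) N).
  { apply sum_Rle. intros j _. unfold u. destruct (Nat.ltb_spec j k), (i (S j)).
all: first [lra | (assert (cc x j <= 0) by (apply cneg; lia); lra) | (assert (0 <= cc x j) by (apply cpos; lia); lra)]. }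
  assert (U : sum_f_R0 (fun m => if i (S m) then cc x m else 0) N
              <= sum_f_R0 (fun m => cc x m - u m) N).
  { apply sum_Rle. intros j _. unfold u. destruct (Nat.ltb_spec j k), (i (S j)).
all: first [lra | (assert (cc x j <= 0) by (apply cneg; lia); lra) | (assert (0 <= cc x j) by (apply cpos; lia); lra)]. }
  assert (E : sum_f_R0 (fun m => cc x m - u m) N = sum_f_R0 (cc x) N - sum_f_R0 u N).
  { apply minus_sum. }
  rewrite E, csum in U.
  assert (0 <= INR (S N) * x ^ N) by (apply Rmult_le_pos; [apply pos_INR | apply pow_le; lra]).
  assert (B := Fbound N).
  apply Rabs_le. lra.
Qed.

End Bounds.

Theorem lemma5p3 (i : nat -> bool) (k : nat) (x : R) :
  (2 <= k)%nat ->
  1 - 1 / INR k <= x -> x < 1 - 1 / INR (k + 1) ->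
  ex_derive (g i) x /\ Rabs (Derive (g i) x) <= INR k * x ^ (k - 1).
Proof.
  intros Hk Hl Hu.
  assert (Kp : 2 <= INR k) by (replace 2 with (INR 2) by (simpl; ring); apply le_INR; auto).
  rewrite plus_INR in Hu. simpl in Hu.
  assert (H1 : INR k * (1 - x) <= 1).
  { assert (1 - x <= 1 / INR k) by lra.
    apply Rmult_le_compat_l with (r := INR k) in H; [|lra].
    field_simplify in H; lra. }
  assert (H2 : 1 < (INR k + 1) * (1 - x)).
  { assert (1 / (INR k + 1) < 1 - x) by lra.
    apply Rmult_lt_compat_l with (r := INR k + 1) in H; [|lra].
    field_simplify in H; lra. }
  assert (Hx : 0 < x < 1).
  { split. assert (1 / INR k <= 1/2) by (apply Rmult_le_compat_l; [lra| apply Rinv_le_contravar; lra]).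
    lra. assert (0 < 1 / (INR k + 1)) by (apply Rdiv_lt_0_compat; lra). lra. }
  destruct (deriv_series i x Hx) as [D [HD HS]].
  split. exists D; exact HD.
  rewrite (is_derive_unique _ _ _ HD).
  assert (Hl' : is_lim_seq (sum_n (fun m => if i (S m) then cc x m else 0)) D) by exact HS.
  apply Rabs_le.
  set (C := INR k * x ^ (k - 1)).
  assert (Hb : forall n, - C <= sum_n (fun m => if i (S m) then cc x m else 0) n <= C).
  { intros n. rewrite sum_n_Reals. apply (proj1 (Rabs_le_between _ _) (ebound k x Hk H1 H2 Hx i n)). }
  split.
  - assert (R0 := is_lim_seq_le (fun _ => - C) _ (- C) D (fun n => proj1 (Hb n)) (is_lim_seq_const _) Hl').
    simpl in R0. lra.
  - assert (R0 := is_lim_seq_le _ (fun _ => C) D C (fun n => proj2 (Hb n)) Hl' (is_lim_seq_const _)).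
    simpl in R0. lra.
Qed.
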